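(* Let $G$ be a finite simple graph with a normal spanning tree $T$ rooted at some vertex $r$, such that $G$ has no secant edges with respect to $T$. If $T$ is a star$^0$-like tree, then $\chi(G)\le 4$.
   Context: For a tree $T$ rooted at $r$, write $y\le_T x$ if $y$ lies on the $rx$-path of $T$. $T$ is normal in $G$ if for every edge $xy$ of $G$, $x\le_T y$ or $y\le_T x$. Two edges $e,e'$ of $G$ are secant with respect to $T$ if there is a path $P=x_1\dots x_n$ in $T$ with $x_1=r$ containing the ends of $e,e'$ such that, with respect to the enumeration $x_1\dots x_n$, both are jumps (an edge $x_ix_j$ with $|i-j|>1$) and, writing them $x_lx_m$, $x_px_q$ with $l<m$, $p<q$, we have $l<p<m<q$ or $p<l<q<m$. A star$^0$-like tree is a tree having exactly one vertex of degree strictly greater than $2$. *)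

(* Defs.v *)
From mathcomp Require Import all_boot.
Set Implicit Arguments. Unset Strict Implicit. Unset Printing Implicit Defensive.

Definition simple_graph (V : finType) (g : rel V) : Prop :=
  symmetric g /\ irreflexive g.

Definition gpath (V : finType) (t : rel V) (a b : V) (p : seq V) : Prop :=
  [/\ p <> [::], head a p = a, last a p = b, uniq p & sorted t p].

Definition has_cycle (V : finType) (t : rel V) : Prop :=
  exists c : seq V, [/\ 3 <= size c, uniq c & cycle t c].

Definition is_tree (V : finType) (t : rel V) : Prop :=
  [/\ simple_graph t, (forall a b : V, exists p, gpath t a b p) & ~ has_cycle t].

Definition spanning_tree (V : finType) (g t : rel V) : Prop :=
  is_tree t /\ (forall x y, t x y -> g x y).

Definition tree_le (V : finType) (t : rel V) (r y x : V) : Prop :=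
  exists p, gpath t r x p /\ y \in p.

Definition normal_tree (V : finType) (g t : rel V) (r : V) : Prop :=
  forall x y, g x y -> tree_le t r x y \/ tree_le t r y x.

(* Edges x_l x_m and x_p x_q of G (l<m, p<q) are secant w.r.t. T: they are
   both jumps of some path P = x_1 ... x_n of T with x_1 = r (0-indexed here),
   and they cross: l<p<m<q or p<l<q<m. *)
Definition secant_pair (V : finType) (g t : rel V) (r : V)
  (a b c d : V) : Prop :=
  exists (P : seq V) (l m p q : nat),
    [/\ gpath t r (last r P) P,
        [/\ l < m < size P, p < q < size P, l.+1 < m & p.+1 < q],
        [/\ [set a; b] = [set nth r P l; nth r P m],
            [set c; d] = [set nth r P p; nth r P q], g a b & g c d] &
        ((l < p) && (p < m) && (m < q)) || ((p < l) && (l < q) && (q < m))].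

Definition no_secant_edges (V : finType) (g t : rel V) (r : V) : Prop :=
  forall a b c d, ~ secant_pair g t r a b c d.

Definition tdeg (V : finType) (t : rel V) (x : V) : nat := #|[set y | t x y]|.

Definition star0_like (V : finType) (t : rel V) : Prop :=
  exists x, forall y, 2 < tdeg t y <-> y = x.

Definition colorable (V : finType) (g : rel V) (k : nat) : Prop :=
  exists f : V -> 'I_k, forall x y, g x y -> f x != f y.

(* Main.v *)
Require Import Defs.
From mathcomp Require Import all_boot.
From mathcomp Require Import zify.
From Stdlib Require Import Classical.
Set Implicit Arguments. Unset Strict Implicit. Unset Printing Implicit Defensive.

Lemma degen_color (U : finType) (E : rel U) (W : {set U}) :
  symmetric E -> irreflexive E ->
  (forall A : {set U}, A \subset W -> A != set0 ->
     exists2 v, v \in A & #|[set u in A | E v u]| <= 2) ->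
  exists k : U -> 'I_3, forall x y, x \in W -> y \in W -> E x y -> k x != k y.
Proof.
move=> Es Ei Hdeg.
suff H : forall n (A : {set U}), #|A| <= n -> A \subset W ->
  exists k : U -> 'I_3, forall x y, x \in A -> y \in A -> E x y -> k x != k y.
  by apply: (H #|W|).
elim=> [|n IH] A cA sAW.
  exists (fun _ => ord0) => x y xA.
  by move: cA; rewrite leqn0 => /eqP/cards0_eq A0; rewrite A0 inE in xA.
have [->|A0] := eqVneq A set0.
  by exists (fun _ => ord0) => x y; rewrite inE.
have [v vA dv] := Hdeg A sAW A0.
have cA' : #|A :\ v| <= n.
  by move: cA; rewrite (cardsD1 v A) vA.
have [k Hk] := IH (A :\ v) cA' (subset_trans (subsetDl _ _) sAW).
set N := [set u in A | E v u].
have : 0 < #|~: (k @: N)|.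
  rewrite cardsCs card_ord.
  have := leq_imset_card k N; move: dv; rewrite -/N setCK; lia.
case/card_gt0P=> col; rewrite inE => colN.
exists (fun u => if u == v then col else k u) => x y xA yA Exy.
case: (eqVneq x v) => [xv|xv]; case: (eqVneq y v) => [yv|yv].
- by subst; rewrite Ei in Exy.
- subst x; apply: contra colN => /eqP ->; apply: imset_f; by rewrite inE yA.
- subst y; rewrite eq_sym; apply: contra colN => /eqP ->; apply: imset_f.
  by rewrite inE xA Es.
- by apply: Hk => //; rewrite !inE ?xv ?yv.
Qed.

Section NC.
Variables (U : finType) (le : rel U) (r0 : U) (E : rel U) (W : {set U}).
Let lt x y := le x y && (x != y).
Hypothesis refl : forall x, le x x.
Hypothesis anti : forall x y, le x y -> le y x -> x = y.
Hypothesis trans : forall x y z, le x y -> le y z -> le x z.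
Hypothesis down : forall x y z, le x z -> le y z -> le x y || le y x.
Hypothesis r0min : forall x, le r0 x.
Hypothesis up : forall x y z, x \in W -> y \in W -> z \in W -> x != r0 ->
  lt x y -> lt x z -> le y z || le z y.
Hypothesis Es : symmetric E.
Hypothesis Ei : irreflexive E.
Hypothesis cmp : forall x y, x \in W -> y \in W -> E x y -> le x y || le y x.
Hypothesis nc : forall x y z w, x \in W -> y \in W -> z \in W -> w \in W ->
  lt x y -> lt y z -> lt z w -> E x z -> E y w -> False.

Lemma lt_trans_le x y z : lt x y -> le y z -> lt x z.
Proof.
rewrite /lt => /andP[xy nxy] yz; rewrite (trans xy yz) /=.
apply/eqP=> exz; subst z; by move/eqP: nxy; apply; apply: anti.
Qed.

Lemma le_lt_trans x y z : le x y -> lt y z -> lt x z.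
Proof.
rewrite /lt => xy /andP[yz nyz]; rewrite (trans xy yz) /=.
apply/eqP=> exz; subst z; by move/eqP: nyz; apply; apply: anti.
Qed.

Lemma ltW x y : lt x y -> le x y. Proof. by case/andP. Qed.

Section Interval.
Variable A : {set U}.
Hypothesis sAW : A \subset W.

Lemma interval n a b : #|[set x in A | le a x && le x b]| <= n ->
  a \in A -> b \in A -> lt a b -> forall x0, x0 \in A -> lt a x0 -> lt x0 b ->
  (forall x y, x \in A -> lt a x -> lt x b -> y \in A -> E x y -> le a y && le y b) ->
  exists2 v, v \in A & #|[set u in A | E v u]| <= 2.
Proof.
have inW : forall x, x \in A -> x \in W by move=> x xA; apply: (subsetP sAW).
elim: n a b => [|n IH] a b cab aA bA ltab x0 x0A ax0 x0b clo.
  have Ha : a \in [set x in A | le a x && le x b] by rewrite inE aA refl ltW.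
  by move: cab; rewrite leqn0 => /eqP/cards0_eq E0; move: Ha; rewrite E0 inE.
case: (classic (exists u w x, [/\ u \in A, w \in A, x \in A, E u w &
   [/\ le a u, lt u w, le w b, ~~ ((u == a) && (w == b)) & lt u x && lt x w]])).
- case=> u [w [x [uA wA xA Euw [au uw wb nab /andP[ux xw]]]]].
  apply: (IH u w _ uA wA uw x xA ux xw).
  + rewrite -ltnS; apply: leq_trans cab; apply: proper_card.
    apply/properP; split.
      apply/subsetP=> y; rewrite !inE => /andP[-> /andP[uy yw]].
      by rewrite (trans au uy) (trans yw wb).
    case: (eqVneq u a) nab => [ua|nua] /= nab.
      exists b; first by rewrite inE bA (ltW ltab) refl.
      rewrite inE bA /=; apply/negP => /andP[_ bw]; move: nab; by rewrite (anti bw wb) eqxx.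
    exists a; first by rewrite inE aA (ltW ltab) refl.
    rewrite inE aA /=; apply/negP => /andP[ua _]; by rewrite (anti ua au) eqxx in nua.
  + move=> y z yA uy yw zA Eyz.
    have ay : lt a y by apply: le_lt_trans au uy.
    have yb : lt y b by apply: lt_trans_le yw wb.
    have /andP[az zb] := clo y z yA ay yb zA Eyz.
    have ub : le u b := trans (ltW uw) wb.
    apply/andP; split.
      case/orP: (down zb ub) => // zu.
      case: (eqVneq z u) => [->|nzu]; first exact: refl.
      exfalso; apply: (nc (inW _ zA) (inW _ uA) (inW _ yA) (inW _ wA)) => //.
        by rewrite /lt zu nzu.
      by rewrite Es.
    case/orP: (down zb wb) => // wz.
    case: (eqVneq w z) => [->|nwz]; first exact: refl.
    exfalso; apply: (nc (inW _ uA) (inW _ yA) (inW _ wA) (inW _ zA) uy yw) => //.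
    by rewrite /lt wz nwz.
- move=> Hno.
  set N := [set u in A | E x0 u].
  have Nin : forall y, y \in N -> le a y && le y b /\ (lt y x0 || lt x0 y).
    move=> y; rewrite inE => /andP[yA Ey]; split.
      exact: (clo x0 y x0A ax0 x0b yA Ey).
    have ny : x0 != y by apply: contraTneq Ey => <-; rewrite Ei.
    case/orP: (cmp (inW _ x0A) (inW _ yA) Ey) => H.
      by rewrite /lt H ny orbT.
    by rewrite /lt H eq_sym ny.
  have lo : {in N &, forall y1 y2, lt y1 x0 -> lt y2 x0 -> y1 = y2}.
    suff H : forall y1 y2, y1 \in N -> y2 \in N -> lt y1 x0 -> lt y2 x0 -> le y1 y2 -> y1 = y2.
      move=> y1 y2 y1N y2N l1 l2.
      case/orP: (down (ltW l1) (ltW l2)) => H12; first exact: H.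
      by apply/esym; apply: H.
    move=> y1 y2 y1N y2N l1 l2 l12; apply: NNPP => n12; apply: Hno.
    exists y1, x0, y2; move: (y1N); rewrite inE => /andP[y1A Ey1].
    move: (y2N); rewrite inE => /andP[y2A _].
    have [/andP[ay1 _] _] := Nin _ y1N.
    split => //; first by rewrite Es.
    split => //; first exact: ltW.
      by apply/negP=> /andP[_ /eqP xb]; move: x0b; rewrite xb /lt eqxx andbF.
    by rewrite l2 /lt l12 andbT; apply/eqP.
  have hi : {in N &, forall y1 y2, lt x0 y1 -> lt x0 y2 -> y1 = y2}.
    suff H : forall y1 y2, y1 \in N -> y2 \in N -> lt x0 y1 -> lt x0 y2 -> le y1 y2 -> y1 = y2.
      move=> y1 y2 y1N y2N l1 l2.
      have [/andP[_ b1] _] := Nin _ y1N.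
      have [/andP[_ b2] _] := Nin _ y2N.
      case/orP: (down b1 b2) => H12; first exact: H.
      by apply/esym; apply: H.
    move=> y1 y2 y1N y2N l1 l2 l12; apply: NNPP => n12; apply: Hno.
    exists x0, y2, y1; move: (y1N); rewrite inE => /andP[y1A _].
    move: (y2N); rewrite inE => /andP[y2A Ey2].
    have [/andP[_ y2b] _] := Nin _ y2N.
    split => //; split => //; first exact: ltW.
      by apply/negP=> /andP[/eqP xa _]; move: ax0; rewrite xa /lt eqxx andbF.
    by rewrite l1 /lt l12 /=; apply/eqP.
  exists x0 => //.
  rewrite -/N.
  have -> : N = [set y in N | lt y x0] :|: [set y in N | lt x0 y].
    apply/setP=> y; rewrite in_setU !(in_set (fun y => (y \in N) && _)).
    case yN: (y \in N) => //=.
    by have [_ ->] := Nin _ yN.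
  apply: leq_trans (leq_card_setU _ _) _.
  have c1 : #|[set y in N | lt y x0]| <= 1.
    apply/card_le1_eqP=> y1 y2; rewrite !(in_set (fun y => (y \in N) && _)) => /andP[y1N l1] /andP[y2N l2].
    exact: lo.
  have c2 : #|[set y in N | lt x0 y]| <= 1.
    apply/card_le1_eqP=> y1 y2; rewrite !(in_set (fun y => (y \in N) && _)) => /andP[y1N l1] /andP[y2N l2].
    exact: hi.
  lia.
Qed.

End Interval.

Lemma nc_degen (A : {set U}) : A \subset W -> A != set0 ->
  exists2 v, v \in A & #|[set u in A | E v u]| <= 2.
Proof.
move=> sAW A0.
have inW : forall x, x \in A -> x \in W by move=> x xA; apply: (subsetP sAW).
have ltE : forall x y, le x y -> x != y -> lt x y by move=> x y H1 H2; rewrite /lt H1 H2.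
case: (eqVneq (A :\ r0) set0) => [A'0 | A'n].
  case/set0Pn: A0 => v vA; exists v => //.
  have isr : forall u, u \in A -> u = r0.
    move=> u uA; have : u \in A :\ r0 = false by rewrite A'0 inE.
    by rewrite !inE uA andbT => /negbFE/eqP.
  rewrite (_ : [set u in A | E v u] = set0) ?cards0 //; apply/setP=> u; rewrite !inE.
  apply/negP=> /andP[uA Evu]; by rewrite (isr _ uA) (isr _ vA) Ei in Evu.
case/set0Pn: A'n => b0 b0A.
pose F b := #|[set z in A | le z b]|.
case: (arg_maxnP F b0A) => b bA' bmax.
have [bnr bA] : b != r0 /\ b \in A by apply/setD1P.
have maxb : forall y, y \in A -> lt b y -> False.
  move=> y yA /andP[by_ nby].
  have ynr : y != r0.
    by apply: contraNneq bnr => yr; rewrite yr in by_; apply/eqP; apply: anti by_ (r0min b).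
  have : y \in A :\ r0 by rewrite !inE ynr.
  move/bmax => H0; have H1 : F y <= F b := H0; move: H1; rewrite leqNgt => /negP; apply; apply: proper_card.
  apply/properP; split.
    apply/subsetP=> z; rewrite !inE => /andP[-> zb]; exact: trans zb by_.
  exists y; first by rewrite inE yA refl.
  rewrite inE yA /=; apply/negP=> yb; by rewrite (anti by_ yb) eqxx in nby.
have bB : b \in [set z in A | le z b] by rewrite inE bA refl.
case: (arg_minnP F bB) => a aB amin.
have aB2 : a \in [set z in A | le z b] := aB.
have [aA ab] : a \in A /\ le a b by move: aB2; rewrite inE => /andP[].
have mina : forall y, y \in A -> le y b -> le a y.
  move=> y yA yb.
  case/orP: (down yb ab) => // ya.
  case: (eqVneq y a) => [->|nya]; first exact: refl.
  have : y \in [set z in A | le z b] by rewrite inE yA yb.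
  move/amin => H0; exfalso; have H1 : F a <= F y := H0; move: H1; rewrite leqNgt => /negP; apply; apply: proper_card.
  apply/properP; split.
    apply/subsetP=> z; rewrite !inE => /andP[-> zb]; exact: trans zb ya.
  exists a; first by rewrite inE aA refl.
  rewrite inE aA /=; apply/negP=> ay; by rewrite (anti ya ay) eqxx in nya.
case: (eqVneq a b) => [eab|nab].
  subst a; exists b => //.
  rewrite (_ : [set u in A | E b u] = set0) ?cards0 //; apply/setP=> u; rewrite !inE.
  apply/negP=> /andP[uA Ebu].
  have nbu : b != u by apply: contraTneq Ebu => <-; rewrite Ei.
  case/orP: (cmp (inW _ bA) (inW _ uA) Ebu) => H.
    by apply: (maxb u uA); rewrite /lt H nbu.
  by move: nbu; rewrite (anti H (mina u uA H)) eqxx.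
have ltab : lt a b by rewrite /lt ab nab.
case: (classic (exists2 x0, x0 \in A & lt a x0 && lt x0 b)).
  case=> x0 x0A /andP[ax0 x0b].
  apply: (interval sAW (leqnn _) aA bA ltab x0A ax0 x0b).
  move=> x y xA ax xb yA Exy.
  have nxy : x != y by apply: contraTneq Exy => <-; rewrite Ei.
  case/orP: (cmp (inW _ xA) (inW _ yA) Exy) => H.
    have xnr : x != r0.
      apply/eqP=> xr; subst x; move: ax; rewrite /lt => /andP[ar nar].
      by rewrite (anti ar (r0min a)) eqxx in nar.
    have yb : le y b.
      case/orP: (up (inW _ xA) (inW _ yA) (inW _ bA) xnr (ltE _ _ H nxy) xb) => // H2.
      case: (eqVneq b y) => [->|nby]; first exact: refl.
      by case: (maxb y yA); rewrite /lt H2 nby.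
    by rewrite yb (trans (ltW ax) H).
  have yb : le y b := trans H (ltW xb).
  by rewrite yb (mina y yA yb).
move=> Hno; exists b => //.
apply: leq_trans (_ : #|[set a]| <= 2); last by rewrite cards1.
apply: subset_leq_card; apply/subsetP=> u; rewrite !inE => /andP[uA Ebu].
have nbu : b != u by apply: contraTneq Ebu => <-; rewrite Ei.
case/orP: (cmp (inW _ bA) (inW _ uA) Ebu) => H.
  by case: (maxb u uA); rewrite /lt H nbu.
have au := mina u uA H.
apply/eqP; apply: NNPP => nua; apply: Hno; exists u => //.
rewrite /lt au H /= (eq_sym u b) nbu andbT; apply/eqP=> e; apply: nua; by rewrite e.
Qed.

Lemma nc_color : exists k : U -> 'I_3, forall x y, x \in W -> y \in W -> E x y -> k x != k y.
Proof. apply: degen_color => //; exact: nc_degen. Qed.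

End NC.

Section Uniq.
Variables (V : finType) (t : rel V).
Hypothesis tsym : symmetric t.
Hypothesis tacyc : ~ has_cycle t.

Lemma last_in (a : V) (P : seq V) : P != [::] -> last a P \in P.
Proof. by case: P => // z P _; rewrite /= mem_last. Qed.

Lemma two_paths_cycle a P Q : path t a P -> path t a Q -> a \notin P -> a \notin Q ->
  uniq P -> uniq Q -> P != [::] -> Q != [::] -> last a P = last a Q ->
  head a P != head a Q -> has_cycle t.
Proof.
move=> pP pQ aP aQ uP uQ P0 Q0 lPQ hPQ.
have hasQ : has (mem Q) P.
  apply/hasP; exists (last a P); first exact: last_in.
  by rewrite /= lPQ last_in.
set i := find (mem Q) P.
have hi : i < size P by rewrite -has_find.
set w := nth a P i.
have wQ : w \in Q by exact: (nth_find a hasQ).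
set j := index w Q.
have hj : j < size Q by rewrite index_mem.
have Xe : take i.+1 P = rcons (take i P) w by rewrite (take_nth a hi).
have Ze : take j.+1 Q = rcons (take j Q) w by rewrite (take_nth a hj) nth_index.
exists (a :: take i.+1 P ++ rev (take j Q)); split.
- rewrite /= size_cat size_rev size_takel // size_takel; last exact: ltnW.
  case: (posnP i) => [i0|]; last lia.
  case: (posnP j) => [j0|]; last lia.
  exfalso; move/negP: hPQ; apply; apply/eqP.
  have e1 : w = head a P by rewrite /w i0; case: (P) P0.
  have e2 : nth a Q j = w by rewrite nth_index.
  rewrite j0 in e2; rewrite -e1 -e2; by case: (Q) Q0.
- rewrite cons_uniq mem_cat mem_rev negb_or.
  rewrite (contra (fun H => mem_take H) aP) (contra (fun H => mem_take H) aQ) /=.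
  rewrite cat_uniq rev_uniq !take_uniq //=.
  rewrite andbT; apply/hasPn=> y; rewrite mem_rev => yY /=.
  have yQ : y \in Q := mem_take yY.
  apply/negP=> yX; have yP : y \in P := mem_take yX.
  move: yX; rewrite (in_take _ yP) ltnS leq_eqVlt => /orP[/eqP iy|iy].
    have ew : y = w by rewrite /w -iy nth_index.
    by move: yY; rewrite ew (in_take _ wQ) ltnn.
  by move: (before_find a iy); rewrite nth_index //= yQ.
- rewrite /= rcons_cat cat_path take_path //=.
  rewrite Xe last_rcons -rev_cons.
  have := rev_path t a (take j.+1 Q).
  rewrite Ze last_rcons belast_rcons => ->.
  rewrite (eq_path (e' := t)); first by rewrite -Ze take_path.
  by move=> x y /=; rewrite tsym.
Qed.

Lemma tails_uniq p q a : path t a p -> path t a q -> uniq (a :: p) -> uniq (a :: q) ->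
  last a p = last a q -> p = q.
Proof.
elim: p a q => [|b p IH] a [|b' q] //=.
- move=> _ _ _ /andP[aq _] e; exfalso; move/negP: aq; apply.
  by rewrite e mem_last.
- move=> _ _ /andP[aq _] _ e; exfalso; move/negP: aq; apply.
  by rewrite -e mem_last.
- move=> /andP[ab pp] /andP[ab' pq] /andP[ap up] /andP[aq uq] e.
  case: (eqVneq b b') => [eb|nbb].
    subst b'; congr (_ :: _); exact: (IH b q pp pq up uq e).
  exfalso; apply: tacyc; apply: (@two_paths_cycle a (b :: p) (b' :: q)) => //=.
  + by rewrite ab.
  + by rewrite ab'.
Qed.

Lemma gpath_uniq a x p q : gpath t a x p -> gpath t a x q -> p = q.
Proof.
case: p => [|z p] [] // _ /= hz lp up sp.
case: q => [|z' q] [] // _ /= hz' lq uq sq.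
subst z z'; congr (_ :: _); apply: (tails_uniq (a := a)) => //; by rewrite lp lq.
Qed.

End Uniq.

Lemma arith1 j n : j != n.-1 -> j < n -> j.+1 < n.
Proof. lia. Qed.
Lemma arith2 k : 0 < k -> k.-1 != k.
Proof. lia. Qed.

Section Order.
Variables (V : finType) (t : rel V) (r : V).
Hypothesis tsym : symmetric t.
Hypothesis tacyc : ~ has_cycle t.
Hypothesis tconn : forall a b : V, exists p, gpath t a b p.

Definition gpathb a b (p : seq V) :=
  [&& p != [::], head a p == a, last a p == b, uniq p & sorted t p].

Lemma gpathbP a b p : reflect (gpath t a b p) (gpathb a b p).
Proof.
rewrite /gpathb; apply: (iffP idP).
  by case/and5P=> /eqP h1 /eqP h2 /eqP h3 h4 h5; split.
by case=> h1 h2 h3 h4 h5; rewrite h2 h3 h4 h5 !eqxx /= andbT; apply/eqP.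
Qed.

Lemma exP x : exists p, gpathb r x p.
Proof. by case: (tconn r x) => p /gpathbP; exists p. Qed.

Definition Pth x := xchoose (exP x).
Lemma PthP x : gpath t r x (Pth x).
Proof. exact/gpathbP/(xchooseP (exP x)). Qed.

Definition tle y x := y \in Pth x.

Lemma tleP y x : tree_le t r y x <-> tle y x.
Proof.
split; first by case=> p [gp yp]; rewrite /tle -(gpath_uniq tsym tacyc gp (PthP x)).
by move=> H; exists (Pth x); split => //; exact: PthP.
Qed.

Lemma Pth_nil x : Pth x != [::].
Proof. by case: (PthP x) => /eqP. Qed.
Lemma Pth_head x : head r (Pth x) = r.
Proof. by case: (PthP x). Qed.
Lemma Pth_last x : last r (Pth x) = x.
Proof. by case: (PthP x). Qed.
Lemma Pth_uniq x : uniq (Pth x).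
Proof. by case: (PthP x). Qed.
Lemma Pth_sorted x : sorted t (Pth x).
Proof. by case: (PthP x). Qed.

Lemma le_refl x : tle x x.
Proof. by rewrite /tle -{1}(Pth_last x) last_in // Pth_nil. Qed.

Lemma le_r x : tle r x.
Proof.
rewrite /tle -{1}(Pth_head x); have := Pth_nil x; case: (Pth x) => //= z p _.
exact: mem_head.
Qed.

Lemma Pth_take y x : tle y x -> Pth y = take (index y (Pth x)).+1 (Pth x).
Proof.
move=> yx; apply: (gpath_uniq tsym tacyc (PthP y)).
have := Pth_nil x; have := Pth_head x; have := Pth_last x; have := Pth_uniq x.
have := Pth_sorted x; have := yx; rewrite /tle.
case: (Pth x) => [|z p] // yp sp up lp hp _; split => //.
- by rewrite (take_nth r) ?index_mem // last_rcons nth_index.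
- exact: take_uniq.
- exact: take_sorted.
Qed.

Lemma le_index w y x : tle y w -> tle x w ->
  tle y x = (index y (Pth w) <= index x (Pth w)).
Proof. by move=> yw xw; rewrite {1}/tle (Pth_take xw) (in_take _ yw) ltnS. Qed.

Lemma le_trans x y z : tle x y -> tle y z -> tle x z.
Proof. by move=> xy yz; move: xy; rewrite /tle (Pth_take yz) => /mem_take. Qed.

Lemma idx_last y : index y (Pth y) = (size (Pth y)).-1.
Proof.
have := Pth_last y; have := Pth_uniq y; have := Pth_nil y.
case: (Pth y) => // z p _ up <-; exact: (index_last up).
Qed.

Lemma le_anti x y : tle x y -> tle y x -> x = y.
Proof.
move=> xy yx.
have := yx; rewrite (le_index (le_refl y) xy) idx_last => H.
have : index x (Pth y) < size (Pth y) by rewrite index_mem.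
move=> H2.
have e : index x (Pth y) = index y (Pth y) by rewrite idx_last; lia.
rewrite -(nth_index r xy) e nth_index //; exact: le_refl.
Qed.

Lemma le_down x y z : tle x z -> tle y z -> tle x y || tle y x.
Proof.
move=> xz yz; rewrite (le_index xz yz) (le_index yz xz); exact: leq_total.
Qed.

Lemma lt_index w y x : tle y w -> tle x w -> tle y x -> y != x ->
  index y (Pth w) < index x (Pth w).
Proof.
move=> yw xw yx nyx; move: yx; rewrite (le_index yw xw) leq_eqVlt => /orP[/eqP e|//].
by move: nyx; rewrite -(nth_index r yw) e nth_index // eqxx.
Qed.

Lemma sorted_adj (s : seq V) a i : sorted t s -> i.+1 < size s ->
  t (nth a s i) (nth a s i.+1).
Proof.
case: s => // z s /= /(pathP a) H hi; exact: H.
Qed.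


Lemma pred_unique x y : t y x -> tle y x -> y != x ->
  y = nth r (Pth x) (size (Pth x)).-2.
Proof.
move=> tyx yx nyx.
have xny : x \notin Pth y.
  apply/negP=> xy; move/negP: nyx; apply; apply/eqP; exact: le_anti.
have e : Pth x = rcons (Pth y) x.
  apply: (gpath_uniq tsym tacyc (PthP x)).
  have := Pth_nil y; have := Pth_head y; have := Pth_last y; have := Pth_uniq y.
  have := Pth_sorted y.
  case: (Pth y) xny => [|z p] // xny sp up lp hp _; split => //.
  - by rewrite last_rcons.
  - by rewrite rcons_uniq xny up.
  - have lp2 : last z p = y := lp; rewrite /= rcons_path lp2 tyx andbT; exact: sp.
rewrite e size_rcons /= nth_rcons.
have := Pth_nil y; have := Pth_last y.
case: (Pth y) => [|z p] // lp _ /=.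
by rewrite ltnSn -lp -(nth_last r (z :: p)).
Qed.

Section Star.
Variable c : V.
Hypothesis hdeg : forall y, 2 < tdeg t y <-> y = c.

Lemma deg3 m p s1 s2 : t m p -> t m s1 -> t m s2 -> p != s1 -> p != s2 -> s1 != s2 -> m = c.
Proof.
move=> h1 h2 h3 n1 n2 n3; apply/hdeg; rewrite /tdeg cardE.
have : size [:: p; s1; s2] <= size (enum [set u | t m u]).
  apply: uniq_leq_size; first by rewrite /= !inE negb_or n1 n2 n3.
  by move=> u; rewrite !inE mem_enum inE => /or3P[] /eqP ->.
by [].
Qed.

Lemma branch a y z : tle a y -> tle a z -> a != r -> ~~ tle y z -> ~~ tle z y ->
  [&& tle a c, tle c y & tle c z].
Proof.
move=> ay az anr nyz nzy.
have uP := Pth_uniq y; have sP := Pth_sorted y.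
have hasf : has (fun u => ~~ tle u z) (Pth y).
  by apply/hasP; exists y => //; exact: le_refl.
set f := find (fun u => ~~ tle u z) (Pth y).
have hf : f < size (Pth y) by rewrite -has_find.
have synz : ~~ tle (nth r (Pth y) f) z := nth_find r hasf.
have ia : index a (Pth y) < f.
  rewrite ltnNge; apply/negP=> fa.
  have uy : tle (nth r (Pth y) f) y by exact: mem_nth.
  have ua : tle (nth r (Pth y) f) a.
    by rewrite (le_index uy ay) index_uniq.
  by move/negP: synz; apply; apply: le_trans ua az.
have f0 : 0 < f by case: (f) ia.
set k := f.-1.
have fk : f = k.+1 by rewrite /k prednK.
set m := nth r (Pth y) k.
have hk1 : k.+1 < size (Pth y) by rewrite -fk.
have hk : k < size (Pth y) := ltnW hk1.
have mz : tle m z.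
  have hkf : k < f by rewrite fk.
  by have /negbFE := before_find r hkf.
have my : tle m y by exact: mem_nth.
have am : tle a m by rewrite (le_index ay my) index_uniq // -ltnS -fk.
have mnr : m != r.
  apply/eqP=> mr; move/negP: anr; apply; apply/eqP; apply: le_anti.
    by rewrite -mr.
  exact: le_r.
have k0 : 0 < k.
  case: (posnP k) => // k0; exfalso; move/negP: mnr; apply; apply/eqP.
  rewrite /m k0 -{2}(Pth_head y); have := Pth_nil y; by case: (Pth y).
set p := nth r (Pth y) k.-1.
have tpm : t p m.
  have := sorted_adj r sP (_ : k.-1.+1 < size (Pth y)).
  rewrite (ltn_predK k0) => /(_ hk); by [].
set sy := nth r (Pth y) k.+1.
have tmsy : t m sy := sorted_adj r sP hk1.
have mZ : m \in Pth z := mz.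
set jm := index m (Pth z).
have hjm : jm.+1 < size (Pth z).
  have : jm < size (Pth z) by rewrite index_mem.
  have : jm != index z (Pth z).
    apply/eqP=> e; move/negP: nzy; apply.
    have : m = z by rewrite -(nth_index r mZ) -/jm e nth_index //; exact: le_refl.
    by move=> <-.
  rewrite idx_last; exact: arith1.
set sz := nth r (Pth z) jm.+1.
have tmsz : t m sz.
  have := sorted_adj r (Pth_sorted z) hjm; by rewrite /jm nth_index.
have szz : tle sz z by exact: mem_nth hjm.
have nsysz : sy != sz by apply: contraNneq synz => e; rewrite fk -/sy e.
have syy : tle sy y by exact: mem_nth hk1.
have pm : tle p m.
  have py : tle p y by apply: mem_nth; exact: leq_ltn_trans (leq_pred k) hk.
  by rewrite (le_index py my) !index_uniq // ?leq_pred //; exact: leq_ltn_trans (leq_pred k) hk.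
have npm : p != m by rewrite /p /m nth_uniq // ?(leq_ltn_trans (leq_pred k) hk) //; exact: arith2.
have msy : tle m sy by rewrite (le_index my syy) !index_uniq // leqnSn.
have nmsy : m != sy by rewrite /sy /m nth_uniq // ltn_eqF.
have msz : tle m sz.
  by rewrite (le_index mZ szz) index_uniq ?Pth_uniq // -/jm.
have nmsz : m != sz.
  by rewrite /sz -{1}(nth_index r mZ) nth_uniq ?Pth_uniq ?index_mem // ltn_eqF.
have np1 : p != sy.
  apply/eqP=> e; move/negP: nmsy; apply; apply/eqP; apply: le_anti => //; by rewrite -e.
have np2 : p != sz.
  apply/eqP=> e; move/negP: nmsz; apply; apply/eqP; apply: le_anti => //; by rewrite -e.
have mc : m = c by apply: (deg3 (p := p) (s1 := sy) (s2 := sz)) => //; rewrite tsym.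
by rewrite -mc am my mz.
Qed.

End Star.

Lemma gnc (g : rel V) : no_secant_edges g t r ->
  forall x y z w, tle x y -> x != y -> tle y z -> y != z -> tle z w -> z != w ->
  g x z -> g y w -> False.
Proof.
move=> ns x y z w xy nxy yz nyz zw nzw gxz gyw.
have yw := le_trans yz zw; have xw := le_trans xy yw; have ww := le_refl w.
have lp := lt_index xw yw xy nxy.
have pm := lt_index yw zw yz nyz.
have mq := lt_index zw ww zw nzw.
have hq : index w (Pth w) < size (Pth w) by rewrite index_mem.
apply: (ns x z y w).
exists (Pth w), (index x (Pth w)), (index z (Pth w)), (index y (Pth w)), (index w (Pth w)).
split.
- rewrite Pth_last; exact: PthP.
- split.
  + apply/andP; split; [exact: ltn_trans lp pm | exact: ltn_trans mq hq].
  + apply/andP; split; [exact: ltn_trans pm mq | exact: hq].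
  + exact: leq_ltn_trans lp pm.
  + exact: leq_ltn_trans pm mq.
- by rewrite !nth_index.
- by rewrite lp pm mq.
Qed.

End Order.

Definition phi (i d : nat) := if i == d then 2 else if i < d then i else i.-1.
Definition phi2 (i d : nat) := if i == d then 0 else (phi i d).+2.

Lemma phi_lt i d : i < 3 -> d < 3 -> phi i d < 4.
Proof. rewrite /phi; repeat case: ifP; move=> *; lia. Qed.
Lemma phi2_lt i d : i < 3 -> d < 3 -> phi2 i d < 4.
Proof. rewrite /phi2 /phi; repeat case: ifP; move=> *; lia. Qed.
Lemma phi_inj i j d : i < 3 -> j < 3 -> d < 3 -> i != j -> phi i d != phi j d.
Proof. rewrite /phi; repeat case: ifP; move=> *; lia. Qed.
Lemma phi2_inj i j d : i < 3 -> j < 3 -> d < 3 -> i != j -> phi2 i d != phi2 j d.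
Proof. rewrite /phi2 /phi; repeat case: ifP; move=> *; lia. Qed.
Lemma phi_small i d : i < 3 -> d < 3 -> i != d -> phi i d <= 1.
Proof. rewrite /phi; repeat case: ifP; move=> *; lia. Qed.
Lemma phi2_big i d : i != d -> 2 <= phi2 i d.
Proof. rewrite /phi2; case: ifP; move=> *; lia. Qed.

Section Main.
Variables (V : finType) (g t : rel V) (r : V).
Hypothesis gsym : symmetric g.
Hypothesis girr : irreflexive g.
Hypothesis tsym : symmetric t.
Hypothesis tirr : irreflexive t.
Hypothesis tconn : forall a b : V, exists p, gpath t a b p.
Hypothesis tacyc : ~ has_cycle t.
Hypothesis tg : forall x y, t x y -> g x y.
Hypothesis hnorm : normal_tree g t r.
Hypothesis hns : no_secant_edges g t r.
Variable c : V.
Hypothesis hdeg : forall y, 2 < tdeg t y <-> y = c.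

Let L := tle r tconn.
Let lt x y := L x y && (x != y).

Lemma Lrefl x : L x x. Proof. exact: le_refl. Qed.
Lemma Lanti x y : L x y -> L y x -> x = y. Proof. exact: (le_anti tsym tacyc). Qed.
Lemma Ltrans x y z : L x y -> L y z -> L x z. Proof. exact: (le_trans tsym tacyc). Qed.
Lemma Ldown x y z : L x z -> L y z -> L x y || L y x. Proof. exact: (le_down tsym tacyc). Qed.
Lemma Lr x : L r x. Proof. exact: le_r. Qed.
Lemma Lnorm x y : g x y -> L x y || L y x.
Proof.
move=> gxy; case: (hnorm gxy) => /(tleP _ tsym tacyc tconn) H; apply/orP; [left|right]; exact: H.
Qed.
Lemma Lgnc x y z w : lt x y -> lt y z -> lt z w -> g x z -> g y w -> False.
Proof.
move=> /andP[? ?] /andP[? ?] /andP[? ?]; exact: (gnc tsym tacyc hns).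
Qed.
Lemma Lbranch a y z : L a y -> L a z -> a != r -> ~~ L y z -> ~~ L z y ->
  [&& L a c, L c y & L c z].
Proof. exact: (branch tsym tacyc hdeg). Qed.

Definition Sc := [set v | L v c].
Definition Xc := [set x in Sc | [forall u, forall w,
  ~~ [&& g u w, L u x, u != x, L x w, x != w & L w c]]].
Definition att b := [exists a, (a \in Sc) && g a b].

Lemma rS : r \in Sc. Proof. by rewrite inE Lr. Qed.

Lemma notS_up a b : a \in Sc -> b \notin Sc -> L a b || L b a -> L a b.
Proof.
rewrite !inE => ac bc /orP[] // ba; by rewrite (Ltrans ba ac) in bc.
Qed.

Lemma K1 a b : a \in Sc -> b \notin Sc -> g a b -> a \in Xc.
Proof.
move=> aS bS gab; rewrite inE aS /=.
apply/forallP=> u; apply/forallP=> w; apply/negP.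
case/and5P=> guw ua nua aw /andP[naw wc].
have ab := notS_up aS bS (Lnorm gab).
have anr : a != r.
  apply: contra nua => /eqP ar; rewrite ar in ua *.
  by rewrite (Lanti ua (Lr u)).
have cb : L c b.
  case: (boolP (L c b)) => // ncb.
  have ac : L a c by move: aS; rewrite inE.
  have bc : ~~ L b c by move: bS; rewrite inE.
  by case/and3P: (Lbranch ab ac anr bc ncb) => _ H _; rewrite H in ncb.
have wb : L w b := Ltrans wc cb.
have nwb : w != b.
  apply: contraNneq bS => <-; by rewrite inE.
by apply: (@Lgnc u a w b); rewrite /lt ?ua ?nua ?aw ?naw ?wb ?nwb.
Qed.

Lemma exd : exists2 d, L c d & d != c.
Proof.
apply: NNPP => H.
have below : forall y, t c y -> y = nth r (Pth r tconn c) (size (Pth r tconn c)).-2.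
  move=> y tcy.
  have nyc : y != c by apply: contraTneq tcy => ->; rewrite tirr.
  have yc : L y c.
    case/orP: (Lnorm (tg tcy)) => // cy.
    by exfalso; apply: H; exists y => //; rewrite eq_sym.
  apply: (pred_unique tsym tacyc) => //; by rewrite tsym.
have : 2 < tdeg t c by apply/hdeg.
rewrite /tdeg => H3.
have : #|[set y | t c y]| <= #|[set nth r (Pth r tconn c) (size (Pth r tconn c)).-2]|.
  by apply: subset_leq_card; apply/subsetP=> y; rewrite !inE => /below ->.
by rewrite cards1; lia.
Qed.

Section WithD.
Variable d : V.
Hypothesis cd : L c d.
Hypothesis dnc : d != c.

Lemma dS : d \notin Sc.
Proof. rewrite inE; apply/negP=> dc; move/negP: dnc; apply; apply/eqP; exact: Lanti. Qed.
Lemma XS x : x \in Xc -> x \in Sc.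
Proof. by rewrite inE => /andP[]. Qed.
Lemma dX : d \notin Xc.
Proof. apply/negP=> /XS; apply/negP; exact: dS. Qed.

Definition E1 x y := (x \in Sc) && (y \in Sc) && g x y || (y == d) && (x \in Xc) ||
  (x == d) && (y \in Xc).
Definition W1 := d |: Sc.

Lemma inW1 v : v \in W1 -> v = d \/ v \in Sc.
Proof. by rewrite !inE => /orP[/eqP->|->]; [left|right]. Qed.

Lemma W1le v : v \in W1 -> L v d.
Proof.
case/inW1 => [->|]; first exact: Lrefl.
by rewrite inE => vc; apply: Ltrans vc cd.
Qed.

Lemma col1 : exists k : V -> 'I_3, forall x y, x \in W1 -> y \in W1 -> E1 x y -> k x != k y.
Proof.
apply: (@nc_color V L r E1 W1).
- exact: Lrefl.
- exact: Lanti.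
- exact: Ltrans.
- exact: Ldown.
- exact: Lr.
- move=> x y z _ yW zW _ _ _; exact: Ldown (W1le yW) (W1le zW).
- move=> x y; rewrite /E1 (gsym y x).
  by case: (x \in Sc); case: (y \in Sc); case: (x == d); case: (y == d);
    case: (x \in Xc); case: (y \in Xc); case: (g x y).
- move=> x; rewrite /E1 girr andbF /=.
  by case: eqP => [->|] //=; rewrite (negbTE dX).
- move=> x y xW yW; case/orP => [/orP[/andP[_ gxy] | /andP[/eqP-> _]] | /andP[/eqP-> _]].
  + exact: Lnorm.
  + by rewrite (W1le xW).
  + by rewrite (W1le yW) orbT.
- move=> x y z w xW yW zW wW xy yz zw Exz Eyw.
  have notd : forall v v', v \in W1 -> v' \in W1 -> lt v v' -> v \in Sc.
    move=> v v' vW v'W /andP[vv nvv].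
    case/inW1: (vW) => // ev; subst v.
    case/inW1: (v'W) => [ev'|v'Sc]; first by rewrite ev' eqxx in nvv.
    by move: v'Sc; rewrite !inE => v'c; move/negP: dS; rewrite inE; case; apply: Ltrans vv v'c.
  have xS := notd _ _ xW yW xy.
  have yS := notd _ _ yW zW yz.
  have zS := notd _ _ zW wW zw.
  have xnd : x != d by apply: contraTneq xS => ->; exact: dS.
  have znd : z != d by apply: contraTneq zS => ->; exact: dS.
  have ynd : y != d by apply: contraTneq yS => ->; exact: dS.
  have gxz : g x z.
    by case/orP: Exz => [/orP[/andP[_ ->] | /andP[/eqP zd _]] | /andP[/eqP xd _]] //;
      [move: znd | move: xnd]; rewrite ?zd ?xd eqxx.
  case/orP: Eyw => [/orP[/andP[_ gyw] | /andP[_ yX]] | /andP[/eqP yd _]].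
  + exact: (Lgnc xy yz zw gxz gyw).
  + move: yX; rewrite inE => /andP[_ /forallP/(_ x)/forallP/(_ z)] /negP; apply.
    move: xy yz => /andP[-> ->] /andP[-> ->]; rewrite gxz /=.
    by move: zS; rewrite inE.
  + by rewrite yd eqxx in ynd.
Qed.

Definition E2 x y := (x \notin Sc) && (y \notin Sc) && g x y ||
  (x == r) && (y \notin Sc) && att y || (y == r) && (x \notin Sc) && att x.
Definition W2 := r |: ~: Sc.

Lemma inW2 v : v \in W2 -> v = r \/ v \notin Sc.
Proof. by rewrite !inE => /orP[/eqP->|->]; [left|right]. Qed.

Lemma col2 : exists k : V -> 'I_3, forall x y, x \in W2 -> y \in W2 -> E2 x y -> k x != k y.
Proof.
apply: (@nc_color V L r E2 W2).
- exact: Lrefl.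
- exact: Lanti.
- exact: Ltrans.
- exact: Ldown.
- exact: Lr.
- move=> x y z xW _ _ xnr /andP[xy _] /andP[xz _].
  have xS : x \notin Sc by case/inW2: xW => // xr; rewrite xr eqxx in xnr.
  case: (boolP (L y z)) => // nyz; case: (boolP (L z y)) => // nzy.
  by case/and3P: (Lbranch xy xz xnr nyz nzy) => xc _ _; rewrite inE xc in xS.
- move=> x y; rewrite /E2 (gsym y x).
  by case: (x \in Sc); case: (y \in Sc); case: (x == r); case: (y == r);
    case: (att x); case: (att y); case: (g x y).
- move=> x; rewrite /E2 girr andbF /=.
  by case: eqP => [->|] //=; rewrite rS.
- move=> x y xW yW; case/orP => [/orP[/andP[_ gxy] | /andP[/andP[/eqP-> _] _]] | /andP[/andP[/eqP-> _] _]].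
  + exact: Lnorm.
  + by rewrite Lr.
  + by rewrite Lr orbT.
- move=> x y z w xW yW zW wW xy yz zw Exz Eyw.
  have notr : forall v v', v' \in W2 -> lt v v' -> v' \notin Sc.
    move=> v v' v'W /andP[vv nvv].
    case/inW2: (v'W) => // ev'; subst v'.
    by rewrite (Lanti vv (Lr v)) eqxx in nvv.
  have yS := notr _ _ yW xy.
  have zS := notr _ _ zW yz.
  have wS := notr _ _ wW zw.
  have ynr : y != r by apply: contraNneq yS => ->; exact: rS.
  have wnr : w != r by apply: contraNneq wS => ->; exact: rS.
  have znr : z != r by apply: contraNneq zS => ->; exact: rS.
  have gyw : g y w.
    by case/orP: Eyw => [/orP[/andP[_ ->] | /andP[/andP[/eqP yr _] _]] | /andP[/andP[/eqP wr _] _]] //;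
      [move: ynr | move: wnr]; rewrite ?yr ?wr eqxx.
  case/orP: Exz => [/orP[/andP[_ gxz] | /andP[_ /existsP[a /andP[aS gaz]]]] | /andP[/andP[/eqP zr _] _]].
  + exact: (Lgnc xy yz zw gxz gyw).
  + have az : L a z := notS_up aS zS (Lnorm gaz).
    have yz' : L y z by case/andP: yz.
    have ay : L a y.
      case/orP: (Ldown az yz') => // ya.
      by move: yS; rewrite inE (Ltrans ya (_ : L a c)) //; rewrite inE in aS.
    have nay : a != y by apply: contraTneq aS => ->.
    by apply: (@Lgnc a y z w) => //; rewrite /lt ay nay.
  + by rewrite zr eqxx in znr.
Qed.

Lemma inord_neq (m n : nat) : m < 4 -> n < 4 -> m != n -> inord m != inord n :> 'I_4.
Proof.
move=> m4 n4 mn; apply/eqP=> /(congr1 (@nat_of_ord 4)); rewrite !inordK // => e.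
by rewrite e eqxx in mn.
Qed.

Lemma main_col : colorable g 4.
Proof.
case: col1 => k1 H1; case: col2 => k2 H2.
exists (fun v => inord (if v \in Sc then phi (k1 v) (k1 d) else phi2 (k2 v) (k2 r))).
have dW1 : d \in W1 by rewrite !inE eqxx.
have rW2 : r \in W2 by rewrite !inE eqxx.
have SW1 : forall v, v \in Sc -> v \in W1 by move=> v vS; rewrite in_setU1 vS orbT.
have SW2 : forall v, v \notin Sc -> v \in W2 by move=> v vS; rewrite in_setU1 in_setC vS orbT.
have cross : forall x y, x \in Sc -> y \notin Sc -> g x y ->
    phi (k1 x) (k1 d) != phi2 (k2 y) (k2 r).
  move=> x y xS yS gxy.
  have xX := K1 xS yS gxy.
  have n1 : k1 x != k1 d by apply: H1 => //; [exact: SW1 | rewrite /E1 eqxx xX orbT].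
  have n2 : k2 r != k2 y.
    apply: H2 => //; first exact: SW2.
    rewrite /E2 eqxx yS /=; apply/orP; left; apply/orP; right.
    by apply/existsP; exists x; rewrite xS gxy.
  have h1 := phi_small (ltn_ord (k1 x)) (ltn_ord (k1 d)) n1.
  rewrite eq_sym in n2.
  have h2 : 2 <= phi2 (k2 y) (k2 r) by apply: phi2_big; exact: n2.
  move: h1 h2; clear; lia.
move=> x y gxy.
case xS: (x \in Sc); case yS: (y \in Sc).
- apply: inord_neq; try exact: phi_lt.
  apply: phi_inj => //; apply: H1; rewrite ?SW1 //; by rewrite /E1 xS yS gxy.
- apply: inord_neq; [exact: phi_lt | exact: phi2_lt | ].
  by apply: cross; rewrite ?xS ?yS.
- apply: inord_neq; [exact: phi2_lt | exact: phi_lt | ].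
  by rewrite eq_sym; apply: cross; rewrite ?xS ?yS // gsym.
- apply: inord_neq; try exact: phi2_lt.
  apply: phi2_inj => //; apply: H2; rewrite ?SW2 ?xS ?yS //; by rewrite /E2 xS yS gxy.
Qed.

End WithD.

Lemma main_col2 : colorable g 4.
Proof. case: exd => d cd dnc; exact: (main_col cd dnc). Qed.
End Main.

Theorem proposition5 (V : finType) (g t : rel V) (r : V) :
  simple_graph g ->
  spanning_tree g t ->
  normal_tree g t r ->
  no_secant_edges g t r ->
  star0_like t ->
  colorable g 4.
Proof.
move=> [gsym girr] [[[tsym tirr] tconn tacyc] tg] hnorm hns [c hdeg].
exact: (@main_col2 V g t r gsym girr tsym tirr tconn tacyc tg hnorm hns c hdeg).
Qed.
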